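(* Let $R$ be a left arithmetical ring with Jacobson radical $J$, let $M$ be a finitely generated projective left $R$-module, and let $I$ be an invertible ideal of $R$ with $I\subseteq J$ such that every finite colength submodule of $M/IM$ is projective as a left $R/I$-module. Let $X$ be a submodule of $M$, and for each integer $j\ge 0$ put $$Y_j=\frac{(M\cap I^{-j}X)+IM}{IM}\subseteq M/IM.$$ Then for each $j\ge 0$ the $j$-th piece of the $I$-adic associated graded module of $M/X$ satisfies $$\frac{I^j(M/X)}{I^{j+1}(M/X)}\cong I^j\otimes_R \frac{M/IM}{Y_j}$$ as left $R$-modules.
   Context: A ring $R$ is left arithmetical if every simple left $R$-module is finite and finitely presented, and for each positive integer $n$ there are only finitely many isomorphism classes of simple left $R$-modules with $n$ elements. An ideal $I$ of $R$ is invertible if $I\otimes_R-$ is an auto-equivalence of the category of left $R$-modules. Let $\tilde R\supseteq R$ be the overring obtained by inverting all invertible ideals of $R$ and $\tilde M=\tilde R\otimes_R M\supseteq M$; for an $R$-submodule $X\subseteq M$ and $j\ge0$, $I^{-j}X\subseteq\tilde M$ denotes the product of the inverse ideal $I^{-j}$ with $X$ inside $\tilde M$ (equivalently, $M\cap I^{-j}X=\{m\in M: I^jm\subseteq X\}$). A submodule has finite colength if the quotient has finite length. *)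

(* Defs.v *)
From HB Require Import structures.
From mathcomp Require Import all_boot all_order all_algebra.
Set Implicit Arguments. Unset Strict Implicit. Unset Printing Implicit Defensive.
Import GRing.Theory.
Local Open Scope ring_scope.

Section ModuleTheory.
Variable R : pzRingType.

Definition submod (M : lmodType R) (S : M -> Prop) : Prop :=
  S 0 /\ forall (a : R) (u v : M), S u -> S v -> S (a *: u + v).

Definition subset_of (T : Type) (S S' : T -> Prop) := forall x, S x -> S' x.

Definition sum_sub (M : lmodType R) (S T : M -> Prop) : M -> Prop :=
  fun m => exists u v, S u /\ T v /\ m = u + v.

Definition left_ideal (L : R -> Prop) : Prop := @submod R^o L.
Definition ideal (I : R -> Prop) : Prop :=
  left_ideal I /\ forall a r : R, I a -> I (a * r).

(* I X : the submodule generated by the a *: x, a in I, x in X *)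
Definition prodsub (M : lmodType R) (I : R -> Prop) (X : M -> Prop) : M -> Prop :=
  fun m => forall S : M -> Prop, submod S ->
    (forall a x, I a -> X x -> S (a *: x)) -> S m.

Fixpoint ipow (I : R -> Prop) (j : nat) : R -> Prop :=
  match j with
  | 0 => fun _ => True
  | j'.+1 => @prodsub R^o I (ipow I j')
  end.

Definition powM (M : lmodType R) (I : R -> Prop) (j : nat) : M -> Prop :=
  prodsub (ipow I j) (fun _ => True).

(* M ∩ I^{-j} X = { m in M : I^j m ⊆ X } *)
Definition colon_pow (M : lmodType R) (I : R -> Prop) (j : nat) (X : M -> Prop)
  : M -> Prop := fun m => forall a, ipow I j a -> X (a *: m).

Definition max_left_ideal (L : R -> Prop) : Prop :=
  left_ideal L /\ ~ L 1 /\
  forall L', left_ideal L' -> subset_of L L' -> (forall x, L' x <-> L x) \/ L' 1.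
Definition jacobson : R -> Prop := fun a => forall L, max_left_ideal L -> L a.

Definition lin (M N : lmodType R) (f : M -> N) : Prop :=
  forall (r : R) (x y : M), f (r *: x + y) = r *: f x + f y.

(* linear map defined on the subquotient A/B of M (values outside A irrelevant) *)
Definition lin_sq (M N : lmodType R) (A B : M -> Prop) (f : M -> N) : Prop :=
  (forall (r : R) (x y : M), A x -> A y -> f (r *: x + y) = r *: f x + f y) /\
  (forall x, B x -> f x = 0).

Definition mod_iso (M N : lmodType R) : Prop :=
  exists f : M -> N, lin f /\ bijective f.

(* --- tensor products, via the universal property ---
   Given a two-sided ideal K (an R-R-bimodule), a module N, a submodule C of N,
   a module Q and submodules B ⊆ A of Q, [is_tensor K C A B beta] says that
   beta induces an isomorphism of left R-modules  K ⊗_R (N/C) ≅ A/B,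
   i.e. beta : K × N/C -> A/B is R-balanced, left R-linear in the first
   variable, and universal among such maps. *)
Definition balanced (K : R -> Prop) (N Q : lmodType R) (C : N -> Prop)
  (B : Q -> Prop) (beta : R -> N -> Q) : Prop :=
  (forall a a' n, K a -> K a' -> B (beta (a + a') n - (beta a n + beta a' n))) /\
  (forall a n n', K a -> B (beta a (n + n') - (beta a n + beta a n'))) /\
  (forall a c, K a -> C c -> B (beta a c)) /\
  (forall a r n, K a -> B (beta (a * r) n - beta a (r *: n))) /\
  (forall a r n, K a -> B (beta (r * a) n - r *: beta a n)).

Definition is_tensor (K : R -> Prop) (N Q : lmodType R) (C : N -> Prop)
  (A B : Q -> Prop) (beta : R -> N -> Q) : Prop :=
  submod C /\ submod A /\ submod B /\ subset_of B A /\
  (forall a n, K a -> A (beta a n)) /\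
  balanced K C B beta /\
  forall (Q' : lmodType R) (gamma : R -> N -> Q'),
    balanced K C (fun x => x = 0) gamma ->
    exists f : Q -> Q', lin_sq A B f /\
      (forall a n, K a -> f (beta a n) = gamma a n) /\
      forall g : Q -> Q', lin_sq A B g ->
        (forall a n, K a -> g (beta a n) = gamma a n) ->
        forall x, A x -> g x = f x.

Definition is_tensor_full (K : R -> Prop) (N Q : lmodType R) (beta : R -> N -> Q) :=
  @is_tensor K N Q (fun x => x = 0) (fun _ => True) (fun x => x = 0) beta.

(* An ideal I is invertible if I ⊗_R - is an auto-equivalence of R-Mod:
   essentially surjective and fully faithful. *)
Definition invertible_ideal (I : R -> Prop) : Prop :=
  ideal I /\
  (forall Q : lmodType R, exists (N : lmodType R) (beta : R -> N -> Q),
      is_tensor_full I beta) /\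
  (forall (N N' Q Q' : lmodType R) (beta : R -> N -> Q) (beta' : R -> N' -> Q'),
      is_tensor_full I beta -> is_tensor_full I beta' ->
      forall psi : Q -> Q', lin psi ->
        (exists phi : N -> N', lin phi /\
           forall a n, I a -> psi (beta a n) = beta' a (phi n)) /\
        (forall phi phi' : N -> N', lin phi -> lin phi' ->
           (forall a n, I a -> psi (beta a n) = beta' a (phi n)) ->
           (forall a n, I a -> psi (beta a n) = beta' a (phi' n)) ->
           forall n, phi n = phi' n)).

Definition span (M : lmodType R) (G : M -> Prop) : M -> Prop :=
  prodsub (fun _ => True) G.

Definition fin_gen_sub (M : lmodType R) (S : M -> Prop) : Prop :=
  exists s : seq M, (forall x, x \in s -> S x) /\
    forall m, S m <-> span (fun x => x \in s) m.

Definition fin_gen (M : lmodType R) : Prop := fin_gen_sub (fun _ : M => True).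

Definition fin_pres (M : lmodType R) : Prop :=
  exists (k : nat) (v : 'I_k -> M),
    (forall m, span (fun x => exists i, x = v i) m) /\
    fin_gen_sub (fun c : 'rV[R]_k => \sum_(i < k) c 0 i *: v i = 0).

Definition mod_finite (M : lmodType R) : Prop := exists s : seq M, forall x, x \in s.

Definition has_card (M : lmodType R) (n : nat) : Prop :=
  exists s : seq M, uniq s /\ size s = n /\ forall x, x \in s.

Definition simple_mod (M : lmodType R) : Prop :=
  (exists x : M, x != 0) /\
  forall S : M -> Prop, submod S -> (forall x, S x -> x = 0) \/ (forall x, S x).

Definition left_arithmetical : Prop :=
  (forall N : lmodType R, simple_mod N -> mod_finite N /\ fin_pres N) /\
  (forall n : nat, exists (k : nat) (F : nat -> lmodType R),
     forall N : lmodType R, simple_mod N -> has_card N n ->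
       exists i, (i < k)%N /\ mod_iso N (F i)).

Definition projective (M : lmodType R) : Prop :=
  forall (P Q : lmodType R) (g : P -> Q) (h : M -> Q),
    lin g -> (forall q : Q, exists p : P, g p = q) -> lin h ->
    exists k : M -> P, lin k /\ forall m, g (k m) = h m.

Definition finite_colength (M : lmodType R) (Z : M -> Prop) : Prop :=
  exists (k : nat) (S : nat -> M -> Prop),
    (forall x, S 0%N x <-> Z x) /\ (forall x, S k x) /\
    (forall i, submod (S i)) /\
    (forall i, (i < k)%N ->
       subset_of (S i) (S i.+1) /\ (exists x, S i.+1 x /\ ~ S i x) /\
       forall T, submod T -> subset_of (S i) T -> subset_of T (S i.+1) ->
         (forall x, T x <-> S i x) \/ (forall x, T x <-> S i.+1 x)).

(* the subquotient Z/W of M is projective as a left R/I-module, where the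
   R/I-modules are the R-modules annihilated by I *)
Definition annihilated (I : R -> Prop) (P : lmodType R) : Prop :=
  forall a (x : P), I a -> a *: x = 0.

Definition projective_sq_over (I : R -> Prop) (M : lmodType R) (Z W : M -> Prop) : Prop :=
  forall (P Q : lmodType R) (g : P -> Q) (h : M -> Q),
    annihilated I P -> annihilated I Q ->
    lin g -> (forall q : Q, exists p : P, g p = q) -> lin_sq Z W h ->
    exists k : M -> P, lin_sq Z W k /\ forall m, Z m -> g (k m) = h m.

(* the submodules of M/IM are the Z/IM with IM ⊆ Z ⊆ M *)
Definition fin_colength_subs_projective (I : R -> Prop) (M : lmodType R) : Prop :=
  forall Z : M -> Prop, submod Z -> subset_of (@powM M I 1%N) Z ->
    finite_colength Z -> projective_sq_over I Z (@powM M I 1%N).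

End ModuleTheory.

(* Main.v *)
Require Import Defs.
From HB Require Import structures.
From mathcomp Require Import all_boot all_order all_algebra.
From mathcomp Require Import boolp.
Set Implicit Arguments. Unset Strict Implicit. Unset Printing Implicit Defensive.
Import GRing.Theory.
Local Open Scope ring_scope.

Section SM.
Variables (R : pzRingType) (M : lmodType R) (S : M -> Prop).
Hypothesis HS : submod S.
Lemma sm0 : S 0. Proof. by case: HS. Qed.
Lemma smD x y : S x -> S y -> S (x + y).
Proof. by move=> hx hy; have := HS.2 1 _ _ hx hy; rewrite scale1r. Qed.
Lemma smZ r x : S x -> S (r *: x).
Proof. by move=> hx; have := HS.2 r _ _ hx sm0; rewrite addr0. Qed.
Lemma smN x : S x -> S (- x).
Proof. by move=> hx; have := smZ (-1) hx; rewrite scaleN1r. Qed.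
Lemma smB x y : S x -> S y -> S (x - y).
Proof. by move=> hx hy; apply: smD => //; apply: smN. Qed.
Lemma smsum (T : finType) (F : T -> M) : (forall i, S (F i)) -> S (\sum_i F i).
Proof. by move=> h; apply: (big_ind S) => //; [apply: sm0 | apply: smD]. Qed.
End SM.

Section PS.
Variables (R : pzRingType).

Lemma sum_unit (V : zmodType) (F : unit -> V) : \sum_(i : unit) F i = F tt.
Proof. by rewrite (big_pred1 tt) //; case. Qed.
Lemma sum_void (V : zmodType) (F : void -> V) : \sum_(i : void) F i = 0.
Proof. by rewrite big_pred0 // => -[]. Qed.

Lemma regZ (a x : R) : (a *: (x : R^o)) = a * x. Proof. by []. Qed.

Lemma prodsub_submod (M : lmodType R) K (Y : M -> Prop) : submod (prodsub (R:=R) K Y).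
Proof.
split; first by move=> S [].
by move=> a u v hu hv S hS hg; case: (hS) => _ h; apply: h; [apply: hu | apply: hv].
Qed.

Lemma prodsub_gen (M : lmodType R) K (Y : M -> Prop) a x : K a -> Y x -> prodsub (R:=R) K Y (a *: x).
Proof. by move=> ha hx S _ hg; apply: hg. Qed.

Lemma prodsub_min (M : lmodType R) K (Y : M -> Prop) (S : M -> Prop) :
  submod S -> (forall a x, K a -> Y x -> S (a *: x)) -> forall x, prodsub (R:=R) K Y x -> S x.
Proof. by move=> hS hg x hx; apply: hx. Qed.

Lemma prodsub_mono (M : lmodType R) (K K' : R -> Prop) (Y Y' : M -> Prop) :
  (forall a, K a -> K' a) -> (forall x, Y x -> Y' x) ->
  forall x, prodsub (R:=R) K Y x -> prodsub (R:=R) K' Y' x.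
Proof.
move=> hK hY; apply: prodsub_min; first exact: prodsub_submod.
by move=> a x ha hx; apply: prodsub_gen; [apply: hK | apply: hY].
Qed.

Definition frep (M : lmodType R) (K : R -> Prop) (Y : M -> Prop) (x : M) :=
  exists (T : finType) (a : T -> R) (y : T -> M),
    (forall i, K (a i)) /\ (forall i, Y (y i)) /\ x = \sum_i a i *: y i.

Lemma prodsub_frep (M : lmodType R) K (Y : M -> Prop) :
  @submod R R^o K -> forall x, prodsub (R:=R) K Y x -> frep (M:=M) K Y x.
Proof.
move=> hK; apply: prodsub_min.
  split.
    exists void, (fun _ => 0), (fun _ => 0); split; first by case.
    by split; [case | rewrite big_pred0 // => -[]].
  move=> r u v [T [a [y [ha [hy ->]]]]] [T' [a' [y' [ha' [hy' ->]]]]].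
  exists (T + T')%type, (fun i => match i with inl i => r * a i | inr i => a' i end),
    (fun i => match i with inl i => y i | inr i => y' i end).
  split; first by case=> i //; have := smZ hK r (ha i).
  split; first by case.
  rewrite big_sumType /= scaler_sumr; congr (_ + _).
  by apply: eq_bigr => i _; rewrite scalerA.
move=> a x ha hx; exists unit, (fun _ => a), (fun _ => x); do 2!split => //.
by rewrite sum_unit.
Qed.
End PS.

Section Ipow.
Variables (R : pzRingType) (I : R -> Prop).
Hypothesis hI : ideal I.

Lemma Isub : @submod R R^o I. Proof. exact: hI.1. Qed.
Lemma Ir a r : I a -> I (a * r). Proof. exact: hI.2. Qed.
Lemma Il r a : I a -> I (r * a). Proof. exact: (smZ Isub r). Qed.

Lemma ipow_submod j : @submod R R^o (ipow I j).
Proof. by case: j => [|j] //=; apply: prodsub_submod. Qed.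

Lemma ipowS j : ipow I j.+1 = @prodsub R R^o I (ipow I j). Proof. by []. Qed.

Lemma ipow_rclosed j a r : ipow I j a -> ipow I j (a * r).
Proof.
elim: j a => [//|j IH] a; rewrite ipowS; move: a.
apply: (@prodsub_min R R^o I (ipow I j) (fun x => ipow I j.+1 (x * r))).
  have hP := ipow_submod j.+1; rewrite ipowS in hP.
  split; first by rewrite mul0r; apply: sm0 hP.
  move=> c u v hu hv; rewrite !regZ mulrDl -mulrA.
  by apply: hP.2.
move=> u v hu hv; rewrite regZ -mulrA; apply: (prodsub_gen (M:=R^o)) => //; exact: IH.
Qed.

Lemma ipowS_sub j a : ipow I j.+1 a -> ipow I j a.
Proof.
rewrite ipowS; move: a; apply: (@prodsub_min R R^o I (ipow I j) (ipow I j)); first exact: ipow_submod.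
by move=> u v _ hv; apply: smZ (ipow_submod j) _ _ hv.
Qed.

Lemma ipowS_I j a : ipow I j.+1 a -> I a.
Proof.
rewrite ipowS; move: a; apply: (@prodsub_min R R^o I (ipow I j) I); first exact: Isub.
by move=> u v hu _; rewrite regZ; apply: Ir.
Qed.

Lemma I_ipow1 a : I a -> ipow I 1 a.
Proof. by move=> ha; rewrite -[a]mulr1 -regZ; apply: (prodsub_gen (M:=R^o)). Qed.

Lemma ipow_mulI j a w : ipow I j a -> I w -> ipow I j.+1 (a * w).
Proof.
elim: j a => [|j IH] a ha hw; first by apply: I_ipow1; apply: Il.
move: a ha; rewrite ipowS.
apply: (@prodsub_min R R^o I (ipow I j) (fun x => ipow I j.+2 (x * w))).
  have hP := ipow_submod j.+2; rewrite ipowS in hP.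
  split; first by rewrite mul0r; apply: sm0 hP.
  move=> c u v hu hv; rewrite !regZ mulrDl -mulrA.
  by apply: hP.2.
move=> u v hu hv; rewrite regZ -mulrA; apply: (prodsub_gen (M:=R^o)) => //; exact: IH.
Qed.

Lemma prodsub_assoc (A B C : R -> Prop) : (forall a r, A a -> A (a * r)) ->
  forall x, @prodsub R R^o A (@prodsub R R^o B C) x ->
            @prodsub R R^o (@prodsub R R^o A B) C x.
Proof.
move=> hA; set P := @prodsub R R^o (@prodsub R R^o A B) C.
have hP : @submod R R^o P by apply: prodsub_submod.
have hT : forall x, @prodsub R R^o B C x -> forall a, A a -> P (a * x).
  apply: (@prodsub_min R R^o B C (fun x => forall a, A a -> P (a * x))).
    split; first by move=> a _; rewrite mulr0; apply: sm0 hP.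
    move=> c u v hu hv a ha; rewrite !regZ mulrDr mulrA.
    by apply: smD hP _ _ (hu _ (hA _ _ ha)) (hv _ ha).
  move=> b c hb hc a ha; rewrite regZ mulrA -regZ; apply: (prodsub_gen (M:=R^o)) => //.
  by rewrite -regZ; apply: (prodsub_gen (M:=R^o)).
apply: (@prodsub_min R R^o A (@prodsub R R^o B C) P) => // a x ha hx; rewrite regZ; exact: hT.
Qed.

Lemma ipowS_assoc j a : ipow I j.+1 a -> @prodsub R R^o (ipow I j) I a.
Proof.
elim: j a => [|j IH] a.
  rewrite ipowS; move: a; apply: (@prodsub_min R R^o I (ipow I 0) (@prodsub R R^o (ipow I 0) I)); first exact: (prodsub_submod (M:=R^o)).
  move=> u v hu _; rewrite regZ -[u * v]mul1r -regZ.
  by apply: (prodsub_gen (M:=R^o)) => //; apply: Ir.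
rewrite ipowS => h; apply: prodsub_assoc; first exact: Ir.
by apply: prodsub_mono h => // x; apply: IH.
Qed.
End Ipow.

Section Quot.
Variables (R : pzRingType) (M : lmodType R) (S : M -> Prop).
Hypothesis HS : submod S.

Lemma S0 : S 0. Proof. by case: HS. Qed.
Lemma SD x y : S x -> S y -> S (x + y).
Proof. by move=> hx hy; have := HS.2 1 _ _ hx hy; rewrite scale1r. Qed.
Lemma SZ r x : S x -> S (r *: x).
Proof. by move=> hx; have := HS.2 r _ _ hx S0; rewrite addr0. Qed.
Lemma SN x : S x -> S (- x).
Proof. by move=> hx; have := SZ (-1) hx; rewrite scaleN1r. Qed.
Lemma SB x y : S x -> S y -> S (x - y).
Proof. by move=> hx hy; apply: SD => //; apply: SN. Qed.

Definition coset (x : M) : M -> Prop := fun y => S (y - x).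
Record quot := Quot { qp : M -> Prop ; qpP : exists x, qp = coset x }.

Definition cl (x : M) : quot := @Quot (coset x) (ex_intro _ x erefl).
Definition rep (q : quot) : M := projT1 (cid (qpP q)).

Lemma quot_eq (q q' : quot) : qp q = qp q' -> q = q'.
Proof.
case: q => p hp; case: q' => p' hp' /= e; subst p'.
by rewrite (Prop_irrelevance hp hp').
Qed.

Lemma repK q : cl (rep q) = q.
Proof.
apply: quot_eq => /=; rewrite /rep; case: (cid _) => x /= ->. done.
Qed.

Lemma cl_eq x y : S (x - y) -> cl x = cl y.
Proof.
move=> h; apply: quot_eq => /=; apply: funext => z; apply: propext; rewrite /coset; split.
- move=> hz; have := SD hz h; by rewrite addrA subrK.
- move=> hz; have := SB hz h; by rewrite opprB addrA subrK.
Qed.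

Lemma cl_eqE x y : cl x = cl y -> S (x - y).
Proof.
move=> /(congr1 qp) /= e.
have : coset y y by rewrite /coset subrr; apply: S0.
rewrite -e /coset => h; have := SN h; by rewrite opprB.
Qed.

Lemma quot_ind (P : quot -> Prop) : (forall x, P (cl x)) -> forall q, P q.
Proof. by move=> h q; rewrite -(repK q). Qed.

Lemma rep_cl x : S (rep (cl x) - x).
Proof. by apply: cl_eqE; rewrite repK. Qed.

Definition qadd (q q' : quot) := cl (rep q + rep q').
Definition qopp (q : quot) := cl (- rep q).
Definition q0 := cl 0.
Definition qscale (r : R) (q : quot) := cl (r *: rep q).

Lemma qaddE x y : qadd (cl x) (cl y) = cl (x + y).
Proof.
apply: cl_eq; have := SD (rep_cl x) (rep_cl y).
by rewrite opprD addrACA.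
Qed.
Lemma qoppE x : qopp (cl x) = cl (- x).
Proof. apply: cl_eq; have := SN (rep_cl x); by rewrite opprB addrC opprK. Qed.
Lemma qscaleE r x : qscale r (cl x) = cl (r *: x).
Proof. apply: cl_eq; have := SZ r (rep_cl x); by rewrite scalerBr. Qed.

Lemma qaddA : associative qadd.
Proof. by elim/quot_ind => x; elim/quot_ind => y; elim/quot_ind => z; rewrite !qaddE addrA. Qed.
Lemma qaddC : commutative qadd.
Proof. by elim/quot_ind => x; elim/quot_ind => y; rewrite !qaddE addrC. Qed.
Lemma qadd0 : left_id q0 qadd.
Proof. by elim/quot_ind => x; rewrite qaddE add0r. Qed.
Lemma qaddN : left_inverse q0 qopp qadd.
Proof. by elim/quot_ind => x; rewrite qoppE qaddE addNr. Qed.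
Definition qT : Type := let _ := HS in quot.
HB.instance Definition _ := gen_eqMixin qT.
HB.instance Definition _ := gen_choiceMixin qT.
HB.instance Definition _ := GRing.isZmodule.Build qT qaddA qaddC qadd0 qaddN.
Lemma qscaleA a b v : qscale a (qscale b v) = qscale (a * b) v.
Proof. by elim/quot_ind: v => x; rewrite !qscaleE scalerA. Qed.
Lemma qscale1 : left_id 1 qscale.
Proof. by elim/quot_ind => x; rewrite qscaleE scale1r. Qed.
Lemma qscaleDr a u v : qscale a (qadd u v) = qadd (qscale a u) (qscale a v).
Proof. by elim/quot_ind: u => x; elim/quot_ind: v => y; rewrite qaddE !qscaleE qaddE scalerDr. Qed.
Lemma qscaleDl v a b : qscale (a + b) v = qadd (qscale a v) (qscale b v).
Proof. by elim/quot_ind: v => x; rewrite !qscaleE qaddE scalerDl. Qed.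
HB.instance Definition _ := GRing.Zmodule_isLmodule.Build R qT qscaleA qscale1 qscaleDr qscaleDl.

Definition clT (x : M) : qT := cl x.
Lemma cl_lin : lin clT.
Proof. move=> r x y. change (cl (r *: x + y) = qadd (qscale r (cl x)) (cl y)). by rewrite qscaleE qaddE. Qed.
Lemma cl0 : clT 0 = 0. Proof. by []. Qed.
Lemma cl_eq0 x : clT x = 0 -> S x.
Proof. by move=> /cl_eqE; rewrite subr0. Qed.
Lemma cl_S x : S x -> clT x = 0.
Proof. by move=> h; apply: cl_eq; rewrite subr0. Qed.
End Quot.

Section Sub.
Variables (R : pzRingType) (M : lmodType R) (S : M -> Prop).
Hypothesis HS : submod S.

Lemma T0 : S 0. Proof. by case: HS. Qed.
Lemma TD x y : S x -> S y -> S (x + y).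
Proof. by move=> hx hy; have := HS.2 1 _ _ hx hy; rewrite scale1r. Qed.
Lemma TZ r x : S x -> S (r *: x).
Proof. by move=> hx; have := HS.2 r _ _ hx T0; rewrite addr0. Qed.
Lemma TN x : S x -> S (- x).
Proof. by move=> hx; have := TZ (-1) hx; rewrite scaleN1r. Qed.

Record subm := Subm { sv : M ; svP : S sv }.

Lemma subm_eq (u v : subm) : sv u = sv v -> u = v.
Proof. case: u => x hx; case: v => y hy /= e; subst y. by rewrite (Prop_irrelevance hx hy). Qed.

Definition sadd (u v : subm) := Subm (TD (svP u) (svP v)).
Definition sopp (u : subm) := Subm (TN (svP u)).
Definition s0 := Subm T0.
Definition sscale (r : R) (u : subm) := Subm (TZ r (svP u)).

Lemma saddA : associative sadd.
Proof. by move=> u v w; apply: subm_eq; rewrite /= addrA. Qed.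
Lemma saddC : commutative sadd.
Proof. by move=> u v; apply: subm_eq; rewrite /= addrC. Qed.
Lemma sadd0 : left_id s0 sadd.
Proof. by move=> u; apply: subm_eq; rewrite /= add0r. Qed.
Lemma saddN : left_inverse s0 sopp sadd.
Proof. by move=> u; apply: subm_eq; rewrite /= addNr. Qed.
Definition sT : Type := let _ := HS in subm.
HB.instance Definition _ := gen_eqMixin sT.
HB.instance Definition _ := gen_choiceMixin sT.
HB.instance Definition _ := GRing.isZmodule.Build sT saddA saddC sadd0 saddN.
Lemma sscaleA a b v : sscale a (sscale b v) = sscale (a * b) v.
Proof. by apply: subm_eq; rewrite /= scalerA. Qed.
Lemma sscale1 : left_id 1 sscale.
Proof. by move=> u; apply: subm_eq; rewrite /= scale1r. Qed.
Lemma sscaleDr a u v : sscale a (sadd u v) = sadd (sscale a u) (sscale a v).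
Proof. by apply: subm_eq; rewrite /= scalerDr. Qed.
Lemma sscaleDl v a b : sscale (a + b) v = sadd (sscale a v) (sscale b v).
Proof. by apply: subm_eq; rewrite /= scalerDl. Qed.
HB.instance Definition _ := GRing.Zmodule_isLmodule.Build R sT sscaleA sscale1 sscaleDr sscaleDl.

Lemma svD (u v : sT) : sv (u + v) = sv u + sv v. Proof. by []. Qed.
Lemma svZ r (u : sT) : sv (r *: u) = r *: sv u. Proof. by []. Qed.
Lemma sv0 : sv (0 : sT) = 0. Proof. by []. Qed.
Lemma svN (u : sT) : sv (- u) = - sv u. Proof. by []. Qed.
Lemma svB (u v : sT) : sv (u - v) = sv u - sv v. Proof. by []. Qed.
End Sub.

Section Inv.
Variables (R : pzRingType) (I : R -> Prop).
Hypothesis hinv : invertible_ideal I.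
Let hI : ideal I := hinv.1.

Definition Iq : lmodType R := sT (Isub hI).
Definition betaI (a : R) (r : R^o) : Iq :=
  match pselect (I a) with
  | left h => @Subm R R^o I (a * r) (Ir hI r h)
  | right _ => 0
  end.
Lemma betaIE a r : I a -> sv (betaI a r) = a * r.
Proof. by move=> h; rewrite /betaI; case: pselect. Qed.

Lemma sub0_submod (M : lmodType R) : submod (fun x : M => x = 0).
Proof. by split => // a u v -> ->; rewrite scaler0 addr0. Qed.

Lemma gamma0 (Q : lmodType R) (N : lmodType R) C (gamma : R -> N -> Q) :
  balanced I C (fun x => x = 0) gamma -> forall n, gamma 0 n = 0.
Proof.
case=> g1 _ n; have /eqP := g1 0 0 n (sm0 (Isub hI)) (sm0 (Isub hI)).
by rewrite addr0 opprD addrA subrr sub0r oppr_eq0 => /eqP.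
Qed.

Lemma tensor_I : is_tensor_full I betaI.
Proof.
have s0 := Isub hI.
split; first exact: sub0_submod.
split; first by split.
split; first exact: sub0_submod.
split; first by [].
split; first by [].
split.
  split; first by move=> a a' n ha ha'; apply: subm_eq;
    rewrite svB svD !betaIE ?mulrDl ?subrr //; apply: (smD s0).
  split; first by move=> a n n' ha; apply: subm_eq;
    rewrite svB svD !betaIE ?mulrDr ?subrr //.
  split; first by move=> a c ha ->; apply: subm_eq; rewrite betaIE // mulr0.
  split; first by move=> a r n ha; apply: subm_eq;
    rewrite svB !betaIE ?regZ ?mulrA ?subrr //; apply: (Ir hI).
  by move=> a r n ha; apply: subm_eq;
    rewrite svB svZ !betaIE ?regZ ?mulrA ?subrr //; apply: (Il hI).
move=> Q' gamma hg.
have g00 := gamma0 hg.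
case: (hg) => g1 [g2 [g3 [g4 g5]]].
have G1 a a' n : I a -> I a' -> gamma (a + a') n = gamma a n + gamma a' n.
  by move=> ha ha'; apply/eqP; rewrite -subr_eq0; apply/eqP; apply: g1.
have G4 a r n : I a -> gamma (a * r) n = gamma a (r *: n).
  by move=> ha; apply/eqP; rewrite -subr_eq0; apply/eqP; apply: g4.
have G5 a r n : I a -> gamma (r * a) n = r *: gamma a n.
  by move=> ha; apply/eqP; rewrite -subr_eq0; apply/eqP; apply: g5.
exists (fun x : Iq => gamma (sv x) 1).
split.
  split; last by move=> x ->; rewrite sv0 g00.
  move=> r x y _ _; rewrite svD svZ regZ G1 ?G5 //; [exact: svP | | exact: svP].
  by apply: (Il hI); exact: svP.
split; first by move=> a n ha; rewrite betaIE // G4 // regZ mulr1.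
move=> g [hg1 hg2] hgb x _.
have -> : x = betaI (sv x) 1 by apply: subm_eq; rewrite betaIE ?mulr1 //; exact: svP.
by rewrite hgb ?betaIE ?mulr1 //; exact: svP.
Qed.


Lemma dual_I : exists (T : finType) (p : T -> R) (c : T -> R -> R),
  [/\ (forall k, I (p k)),
  (forall t, I t -> t = \sum_k p k * c k t),
  (forall k u, I u -> exists rho, forall t, I t -> u * c k t = rho * t),
  (forall k t t', I t -> I t' -> c k (t + t') = c k t + c k t') &
  (forall k u v, I u -> c k (u * v) = c k u * v)].
Proof.
have s0 := Isub hI.
have [N [beta hb]] := hinv.2.1 R^o.
have hb' := hb.
case: hb' => _ [_ [_ [_ [_ [[b1 [b2 [b3 [b4 b5]]]] huniv]]]]].
have B5 a r n : I a -> beta (r * a) n = r * beta a n.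
  by move=> ha; apply/eqP; rewrite -subr_eq0; apply/eqP; apply: b5.
pose S := fun x : R => exists (T : finType) (p : T -> R) (n : T -> N),
  (forall k, I (p k)) /\ x = \sum_k beta (p k) (n k).
have hS : @submod R R^o S.
  split.
    exists void, (fun _ => 0), (fun _ => 0); split; first by case.
    by rewrite sum_void.
  move=> r u v [T [p [n [hp ->]]]] [T' [p' [n' [hp' ->]]]].
  exists (T + T')%type, (fun i => match i with inl i => r * p i | inr i => p' i end),
    (fun i => match i with inl i => n i | inr i => n' i end).
  split; first by case=> i //; apply: (Il hI).
  rewrite big_sumType /= regZ mulr_sumr; congr (_ + _).
  by apply: eq_bigr => i _; rewrite B5.
have S1 : S 1.
  pose Q' : lmodType R := qT hS.
  pose gamma := fun (_ : R) (_ : N) => (0 : Q').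
  have hg : balanced I (fun x => x = 0) (fun x => x = 0) gamma.
    rewrite /gamma; split; [|split; [|split; [|split]]] => *; by rewrite ?(addr0, subrr, scaler0, subr0).
  have [f [hf [hfb hfu]]] := huniv Q' gamma hg.
  have L1 : lin_sq (fun _ => True) (fun x => x = 0) (clT hS).
    by split; [move=> r x y _ _; apply: cl_lin | move=> x ->; apply: cl0].
  have L0 : lin_sq (fun _ => True) (fun x => x = 0) (fun _ : R^o => (0 : Q')).
    by split => // r x y _ _; rewrite scaler0 addr0.
  have e1 := hfu _ L1.
  have e0 := hfu _ L0.
  have H1 : forall a n, I a -> clT hS (beta a n) = gamma a n.
    move=> a n ha; apply: cl_S; exists unit, (fun _ => a), (fun _ => n).
    by rewrite sum_unit.
  have H0 : forall a n, I a -> (0 : Q') = gamma a n by [].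
  apply: (cl_eq0 (HS := hS)).
  by rewrite (e1 H1 1 Logic.I) -(e0 H0 1 Logic.I).
case: S1 => T [p [n [hp e1]]].
have FF := hinv.2.2 N R^o R^o Iq beta betaI hb (tensor_I).
have ex_phi t : I t -> exists phi : N -> R^o, lin phi /\
    forall a m, I a -> beta a m * t = a * phi m.
  move=> ht.
  pose psi := fun x : R^o => (@Subm R R^o I (x * t) (Il hI x ht) : Iq).
  have hpsi : lin psi.
    move=> r x y; apply: subm_eq; by rewrite /= mulrDl !regZ mulrA.
  have [[phi [hl hphi]] _] := FF psi hpsi.
  exists phi; split => // a m ha.
  by have /(congr1 (fun x : Iq => sv x)) := hphi a m ha; rewrite betaIE.
have uniq_phi t : I t -> forall phi phi' : N -> R^o, lin phi -> lin phi' ->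
    (forall a m, I a -> beta a m * t = a * phi m) ->
    (forall a m, I a -> beta a m * t = a * phi' m) -> forall m, phi m = phi' m.
  move=> ht.
  pose psi := fun x : R^o => (@Subm R R^o I (x * t) (Il hI x ht) : Iq).
  have hpsi : lin psi.
    move=> r x y; apply: subm_eq; by rewrite /= mulrDl !regZ mulrA.
  have [_ hu] := FF psi hpsi.
  move=> phi phi' hl hl' h h'; apply: hu => //.
    by move=> a m ha; apply: subm_eq; rewrite betaIE //= h.
  by move=> a m ha; apply: subm_eq; rewrite betaIE //= h'.
have hex : forall t, exists phi : N -> R^o, I t -> lin phi /\
    forall a m, I a -> beta a m * t = a * phi m.
  move=> t; case: (pselect (I t)) => h.
    by have [phi hphi] := ex_phi t h; exists phi.
  by exists (fun _ => 0).
have [Phi hPhi] := choice hex.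
exists T, p, (fun k t => Phi t (n k)).
split => //.
  move=> t ht; rewrite -{1}[t]mul1r e1 mulr_suml; apply: eq_bigr => k _.
  by rewrite (hPhi t ht).2.
  move=> k u hu; exists (beta u (n k)) => t ht.
  by rewrite (hPhi t ht).2.
  move=> k t t' ht ht'; have htt : I (t + t') by apply: (smD s0).
  apply: (uniq_phi _ htt (Phi (t + t')) (fun m => Phi t m + Phi t' m)).
  - exact: (hPhi _ htt).1.
  - move=> r x y; rewrite ((hPhi _ ht).1 r x y) ((hPhi _ ht').1 r x y).
    by rewrite !regZ mulrDr addrACA.
  - exact: (hPhi _ htt).2.
  - by move=> a m ha; rewrite mulrDr mulrDr (hPhi _ ht).2 // (hPhi _ ht').2.
move=> k u v hu; have huv : I (u * v) by apply: (Ir hI).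
apply: (uniq_phi _ huv (Phi (u * v)) (fun m => Phi u m * v)).
- exact: (hPhi _ huv).1.
- by move=> r x y; rewrite ((hPhi _ hu).1 r x y) !regZ mulrDl mulrA.
- exact: (hPhi _ huv).2.
- by move=> a m ha; rewrite mulrA (hPhi _ hu).2 // mulrA.
Qed.

End Inv.

Lemma dbl0 (V : zmodType) (x : V) : x = x + x -> x = 0.
Proof. move=> h; have e := addrK x x; rewrite -h subrr in e; by rewrite -e. Qed.

Section DB.
Variables (R : pzRingType) (I : R -> Prop).
Hypothesis hI : ideal I.
Variables (T0 : finType) (p : T0 -> R) (c : T0 -> R -> R).
Hypotheses (hp : forall k, I (p k))
  (hdec : forall t, I t -> t = \sum_k p k * c k t)
  (hrho : forall k u, I u -> exists rho, forall t, I t -> u * c k t = rho * t)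
  (hadd : forall k t t', I t -> I t' -> c k (t + t') = c k t + c k t')
  (hmul : forall k u v, I u -> c k (u * v) = c k u * v).

Lemma c0 k : c k 0 = 0.
Proof.
have s0 := Isub hI.
by apply: dbl0; rewrite -(hadd k (sm0 s0) (sm0 s0)) addr0.
Qed.

Lemma c_sum k (T : finType) (F : T -> R) : (forall i, I (F i)) ->
  c k (\sum_i F i) = \sum_i c k (F i).
Proof.
have s0 := Isub hI.
move=> hF.
have : I (\sum_i F i) /\ c k (\sum_i F i) = \sum_i c k (F i).
  apply: (big_ind2 (fun x y => I x /\ c k x = y)).
  - by split; [apply: sm0 s0 | apply: c0].
  - by move=> x1 x2 y1 y2 [h1 <-] [h2 <-]; split; [apply: (smD s0) | apply: hadd].
  - by move=> i _; split.
by case.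
Qed.

Lemma c_ipow j k t : ipow I j.+1 t -> ipow I j (c k t).
Proof.
move=> ht; rewrite ipowS in ht.
have [T [a [y [ha [hy ->]]]]] := prodsub_frep (Isub hI) ht.
rewrite c_sum; last by move=> i; rewrite regZ; apply: (Ir hI).
apply: (smsum (ipow_submod I j)) => i.
by rewrite regZ hmul // -regZ; apply: (smZ (ipow_submod I j)).
Qed.

Lemma DB j : exists (T : finType) (P : T -> R) (ka : T -> R -> R),
  [/\ forall K, ipow I j (P K),
      forall t, ipow I j t -> t = \sum_K P K * ka K t &
      forall K a, ipow I j a -> exists rho, forall t, ipow I j t -> a * ka K t = rho * t].
Proof.
elim: j => [|j [T [P [ka [hP hd hr]]]]].
  exists unit, (fun _ => 1), (fun _ t => t); split => //.
    by move=> t _; rewrite sum_unit mul1r.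
  by move=> K a _; exists a.
exists (T0 * T)%type, (fun x => p x.1 * P x.2), (fun x t => ka x.2 (c x.1 t)); split.
- by move=> [k K]; rewrite /= -regZ; apply: (prodsub_gen (M:=R^o)).
- move=> t ht.
  have htI := ipowS_I hI ht.
  rewrite {1}(hdec htI) -(pair_bigA _ (fun k K => p k * P K * ka K (c k t))) /=.
  apply: eq_bigr => k _; rewrite {1}(hd _ (c_ipow k ht)) mulr_sumr.
  by apply: eq_bigr => K _; rewrite mulrA.
- move=> [k K] a /=; move: a.
  apply: (@prodsub_min R R^o I (ipow I j)
    (fun a => exists rho, forall t, ipow I j.+1 t -> a * ka K (c k t) = rho * t)).
    split; first by exists 0 => t _; rewrite !mul0r.
    move=> r u v [ru hu] [rv hv]; exists (r * ru + rv) => t ht.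
    by rewrite regZ mulrDl -mulrA hu // hv // mulrDl mulrA.
  move=> u v hu hv; have [r1 h1] := hr K v hv.
  have [r2 h2] := hrho k (Ir hI r1 hu).
  exists r2 => t ht; rewrite regZ -mulrA h1; last exact: c_ipow.
  by rewrite mulrA h2 //; exact: (ipowS_I hI ht).
Qed.
End DB.

Section Key.
Variables (R : pzRingType) (I : R -> Prop) (M : lmodType R) (X : M -> Prop) (j : nat).
Hypotheses (hinv : invertible_ideal I) (hX : submod X).
Let hI : ideal I := hinv.1.

Lemma DBI : exists (T : finType) (P : T -> R) (ka : T -> R -> R),
  [/\ forall K, ipow I j (P K),
      forall t, ipow I j t -> t = \sum_K P K * ka K t &
      forall K a, ipow I j a -> exists rho, forall t, ipow I j t -> a * ka K t = rho * t].
Proof.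
have [T0 [p [c [hp hdec hrho hadd hmul]]]] := dual_I hinv.
exact: (DB hI hp hdec hrho hadd hmul).
Qed.

Definition Cs := sum_sub (colon_pow I j X) (@powM R M I 1%N).

Lemma powM_submod k : submod (@powM R M I k).
Proof. exact: prodsub_submod. Qed.

Variables (Q' : lmodType R) (gamma : R -> M -> Q').
Hypothesis hg : balanced (ipow I j) Cs (fun x => x = 0) gamma.

Let sj := ipow_submod I j.

Lemma G1 a a' n : ipow I j a -> ipow I j a' -> gamma (a + a') n = gamma a n + gamma a' n.
Proof. by move=> ha ha'; apply/eqP; rewrite -subr_eq0; apply/eqP; apply: hg.1. Qed.
Lemma G2 a n n' : ipow I j a -> gamma a (n + n') = gamma a n + gamma a n'.
Proof. by move=> ha; apply/eqP; rewrite -subr_eq0; apply/eqP; apply: hg.2.1. Qed.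
Lemma G3 a x : ipow I j a -> Cs x -> gamma a x = 0.
Proof. by move=> ha hx; apply: hg.2.2.1. Qed.
Lemma G4 a r n : ipow I j a -> gamma (a * r) n = gamma a (r *: n).
Proof. by move=> ha; apply/eqP; rewrite -subr_eq0; apply/eqP; apply: hg.2.2.2.1. Qed.
Lemma G5 a r n : ipow I j a -> gamma (r * a) n = r *: gamma a n.
Proof. by move=> ha; apply/eqP; rewrite -subr_eq0; apply/eqP; apply: hg.2.2.2.2. Qed.

Lemma Gz n : gamma 0 n = 0.
Proof. by apply: dbl0; rewrite -G1 ?addr0 //; apply: (sm0 sj). Qed.
Lemma GN a n : ipow I j a -> gamma (- a) n = - gamma a n.
Proof.
move=> ha; apply/eqP; rewrite -addr_eq0 -G1 ?addNr ?Gz //.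
exact: (smN sj).
Qed.

Lemma Gsum1 (T : finType) (F : T -> R) n : (forall i, ipow I j (F i)) ->
  gamma (\sum_i F i) n = \sum_i gamma (F i) n.
Proof.
move=> hF.
have : ipow I j (\sum_i F i) /\ gamma (\sum_i F i) n = \sum_i gamma (F i) n.
  apply: (big_ind2 (fun x y => ipow I j x /\ gamma x n = y)).
  - by split; [apply: (sm0 sj) | apply: Gz].
  - by move=> x1 x2 y1 y2 [h1 <-] [h2 <-]; split; [apply: (smD sj) | apply: G1].
  - by move=> i _; split.
by case.
Qed.

Lemma Gsum2 (T : finType) (F : T -> M) a : ipow I j a ->
  gamma a (\sum_i F i) = \sum_i gamma a (F i).
Proof.
move=> ha; apply: (big_ind2 (fun x y => gamma a x = y)) => //.
- by apply: G3 => //; exists 0, 0; split; [|split]; rewrite ?addr0 //;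
    [move=> b _; rewrite scaler0; apply: (sm0 hX) | apply: (sm0 (powM_submod 1))].
- by move=> x1 x2 y1 y2 <- <-; apply: G2.
Qed.

Lemma keyZ (T : finType) (t : T -> R) (m : T -> M) :
  (forall i, ipow I j (t i)) -> X (\sum_i t i *: m i) -> \sum_i gamma (t i) (m i) = 0.
Proof.
move=> ht hX0.
have [T' [P [ka [hP hd hr]]]] := DBI.
transitivity (\sum_i \sum_K gamma (P K) (ka K (t i) *: m i)).
  apply: eq_bigr => i _; rewrite {1}(hd _ (ht i)) Gsum1.
    by apply: eq_bigr => K _; rewrite G4.
  by move=> K; apply: ipow_rclosed.
rewrite exchange_big /=; apply: big1 => K _.
rewrite -Gsum2 //; apply: G3 => //.
exists (\sum_i ka K (t i) *: m i), 0; split; last split.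
- move=> a ha; have [rho hrho] := hr K a ha.
  rewrite scaler_sumr (eq_bigr (fun i => rho *: (t i *: m i))).
    by rewrite -scaler_sumr; apply: (smZ hX).
  by move=> i _; rewrite !scalerA hrho.
- exact: (sm0 (powM_submod 1)).
- by rewrite addr0.
Qed.
End Key.

Lemma sum_sub_submod (R : pzRingType) (M : lmodType R) (S T : M -> Prop) :
  submod S -> submod T -> submod (sum_sub S T).
Proof.
move=> hS hT; split; first by exists 0, 0; rewrite addr0; split; [apply: (sm0 hS)|split; [apply: (sm0 hT)|]].
move=> r x y [u [v [hu [hv ->]]]] [u' [v' [hu' [hv' ->]]]].
exists (r *: u + u'), (r *: v + v'); split; first exact: hS.2.
split; first exact: hT.2.
by rewrite scalerDr addrACA.
Qed.

Lemma subKK (V : zmodType) (x a b : V) : x - a - (x - b) = b - a.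
Proof. by rewrite opprB addrC addrA subrK. Qed.

Section Thm.
Variables (R : pzRingType) (M : lmodType R) (I : R -> Prop) (X : M -> Prop) (j : nat).
Hypotheses (hinv : invertible_ideal I) (hX : submod X).
Let hI : ideal I := hinv.1.
Let sj := ipow_submod I j.

Lemma colon_submod : submod (colon_pow I j X).
Proof.
split; first by move=> a _; rewrite scaler0; apply: (sm0 hX).
move=> r u v hu hv a ha; rewrite scalerDr scalerA.
by apply: (smD hX); [apply: hu; apply: ipow_rclosed | apply: hv].
Qed.

Lemma powM_mul a x : ipow I j a -> @powM R M I 1%N x -> @powM R M I j.+1 (a *: x).
Proof.
move=> ha hx; move: x hx a ha.
apply: (@prodsub_min R M (ipow I 1) (fun _ => True)
  (fun x => forall a, ipow I j a -> @powM R M I j.+1 (a *: x))).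
  split; first by move=> a _; rewrite scaler0; apply: (sm0 (powM_submod _ _ _)).
  move=> r u v hu hv a ha; rewrite scalerDr scalerA.
  apply: (smD (powM_submod _ _ _)); [apply: hu; apply: ipow_rclosed | apply: hv] => //.
move=> w m hw _ a ha; rewrite scalerA; apply: prodsub_gen => //.
by apply: ipow_mulI => //; apply: (ipowS_I hI hw).
Qed.

Lemma powM_frep x : @powM R M I j.+1 x -> frep (M:=M) (ipow I j) (@powM R M I 1%N) x.
Proof.
move=> hx; apply: (prodsub_frep sj).
move: x hx; apply: prodsub_min; first exact: prodsub_submod.
move=> a y ha _.
have [T [b [w [hb [hw ->]]]]] := prodsub_frep (M:=R^o) sj (ipowS_assoc hI ha).
rewrite scaler_suml; apply: (smsum (prodsub_submod _ _)) => i.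
rewrite regZ -scalerA; apply: prodsub_gen => //.
by apply: prodsub_gen => //; apply: I_ipow1.
Qed.

End Thm.

Unset Implicit Arguments. Set Strict Implicit. Set Printing Implicit Defensive.

Theorem proposition3p1 (R : pzRingType) (M : lmodType R) (I : R -> Prop)
  (X : M -> Prop) (j : nat) :
  left_arithmetical R ->
  fin_gen M -> projective M ->
  invertible_ideal I -> subset_of I (jacobson (R:=R)) ->
  fin_colength_subs_projective I M ->
  submod X ->
  exists beta : R -> M -> M,
    is_tensor (ipow I j) (sum_sub (colon_pow I j X) (@powM R M I 1%N))
      (sum_sub (@powM R M I j) X) (sum_sub (@powM R M I j.+1) X) beta.
Proof.
move=> _ _ _ hinv _ _ hX.
have hI : ideal I := hinv.1.
have sj := ipow_submod I j.
set A := sum_sub (@powM R M I j) X.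
set B := sum_sub (@powM R M I j.+1) X.
set C := sum_sub (colon_pow I j X) (@powM R M I 1%N).
have hA : submod A by apply: sum_sub_submod => //; apply: powM_submod.
have hB : submod B by apply: sum_sub_submod => //; apply: powM_submod.
have hC : submod C by apply: sum_sub_submod; [apply: colon_submod | apply: powM_submod].
have B0 : B 0 by apply: (sm0 hB).
have XB x : X x -> B x.
  by move=> h; exists 0, x; rewrite add0r; split => //; apply: (sm0 (powM_submod _ _ _)).
have XA x : X x -> A x.
  by move=> h; exists 0, x; rewrite add0r; split => //; apply: (sm0 (powM_submod _ _ _)).
have genA a n : ipow I j a -> A (a *: n).
  move=> ha; exists (a *: n), 0; rewrite addr0; split => //; last by split => //; apply: (sm0 hX).
  exact: prodsub_gen.
exists (fun a n => a *: n).
split => //; split => //; split => //.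
split.
  move=> x [u [v [hu [hv ->]]]]; exists u, v; split => //.
  by apply: prodsub_mono hu => // a; apply: ipowS_sub.
split; first by move=> a n ha; apply: genA.
split.
  split; first by move=> a a' n _ _; rewrite scalerDl subrr.
  split; first by move=> a n n' _; rewrite scalerDr subrr.
  split.
    move=> a c ha [u [v [hu [hv ->]]]]; exists (a *: v), (a *: u).
    by split; [apply: powM_mul | split; [apply: hu | rewrite scalerDr addrC]].
  split; first by move=> a r n _; rewrite scalerA subrr.
  by move=> a r n _; rewrite scalerA subrr.
move=> Q' gamma hg.
pose Rep (x : M) (T : finType) (t : T -> R) (m : T -> M) :=
  (forall i, ipow I j (t i)) /\ X (x - \sum_i t i *: m i).
pose PR (x : M) (q : Q') := exists (T : finType) (t : T -> R) (m : T -> M),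
  Rep x T t m /\ q = \sum_i gamma (t i) (m i).
have PRu x q q' : PR x q -> PR x q' -> q = q'.
  move=> [T [t [m [[ht hx] ->]]]] [T' [t' [m' [[ht' hx'] ->]]]].
  apply/eqP; rewrite -subr_eq0; apply/eqP.
  have := keyZ hinv hX hg (t := fun i : T + T' => match i with inl i => t i | inr i => - t' i end)
    (m := fun i : T + T' => match i with inl i => m i | inr i => m' i end).
  rewrite !big_sumType /=.
  rewrite (eq_bigr (fun i => - gamma (t' i) (m' i))); last by move=> i _; rewrite (GN hg) //.
  rewrite sumrN; apply.
    by case=> i //; apply: (smN sj).
  rewrite (eq_bigr (fun i => - (t' i *: m' i))); last by move=> i _; rewrite scaleNr.
  rewrite sumrN; have := smB hX hx' hx.
  by rewrite subKK.
have PRe x : A x -> exists q, PR x q.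
  move=> [u [v [hu [hv ->]]]].
  have [T [t [m [ht [_ eu]]]]] := prodsub_frep sj hu.
  exists (\sum_i gamma (t i) (m i)), T, t, m; split => //; split => //.
  by rewrite -eu addrAC subrr add0r.
pose f := fun x : M => match pselect (exists q, PR x q) with
  | left h => projT1 (cid h) | right _ => 0 end.
have fE x q : PR x q -> f x = q.
  move=> h; rewrite /f; case: pselect => [h'|]; last by case; exists q.
  by case: (cid h') => q' hq' /=; apply: PRu hq' h.
exists f; split.
  split.
    move=> r x y hx hy.
    have [q [T [t [m [[ht hx'] _]]]]] := PRe x hx.
    have [q' [T' [t' [m' [[ht' hy'] _]]]]] := PRe y hy.
    rewrite (fE x (\sum_i gamma (t i) (m i))); last by exists T, t, m.
    rewrite (fE y (\sum_i gamma (t' i) (m' i))); last by exists T', t', m'.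
    apply: fE.
    exists (T + T')%type, (fun i => match i with inl i => r * t i | inr i => t' i end),
      (fun i => match i with inl i => m i | inr i => m' i end).
    split.
      split; first by case=> i //; apply: (smZ sj).
      rewrite big_sumType /= (eq_bigr (fun i => r *: (t i *: m i))); last by move=> i _; rewrite scalerA.
      rewrite -scaler_sumr opprD addrACA -scalerBr; exact: hX.2.
    rewrite big_sumType /= scaler_sumr; congr (_ + _).
    by apply: eq_bigr => i _; rewrite (G5 hg).
  move=> x [u [v [hu [hv ->]]]].
  have [T [t [m [ht [hm eu]]]]] := powM_frep hinv hu.
  apply: fE; exists T, t, m; split.
    by split => //; rewrite -eu addrAC subrr add0r.
  rewrite big1 // => i _; apply: (G3 hg) => //; exists 0, (m i); rewrite add0r; split => //.
  by move=> a _; rewrite scaler0; apply: (sm0 hX).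
split.
  move=> a n ha; apply: fE; exists unit, (fun _ => a), (fun _ => n); split.
    by split => //; rewrite sum_unit subrr; apply: (sm0 hX).
  by rewrite sum_unit.
move=> g [hg1 hg2] hgb x hx.
have [q [T [t [m [[ht hx'] eq]]]]] := PRe x hx.
rewrite (fE x q); last by exists T, t, m.
have g0 : g 0 = 0 by apply: hg2.
have gadd u v : A u -> A v -> g (u + v) = g u + g v.
  by move=> hu hv; have := hg1 1 u v hu hv; rewrite !scale1r.
have hs : A (\sum_i t i *: m i) /\ g (\sum_i t i *: m i) = \sum_i gamma (t i) (m i).
  apply: (big_ind2 (fun u w => A u /\ g u = w)).
  - by split; [apply: (sm0 hA) | apply: g0].
  - by move=> x1 x2 y1 y2 [h1 <-] [h2 <-]; split; [apply: (smD hA) | apply: gadd].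
  - by move=> i _; split; [apply: genA | apply: hgb].
rewrite eq -hs.2 -[x](subrK (\sum_i t i *: m i)) gadd.
- by rewrite (hg2 _ (XB _ hx')) add0r.
- exact: XA.
- exact: hs.1.
Qed.
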